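(* Let $\alpha=\sqrt{a_{ij}y^iy^j}$ be a Riemannian metric and $\beta=b_iy^i$ a $1$-form on a manifold, with $b=\|\beta\|_\alpha$, satisfying ${}^\alpha R^i{}_j=\mu(\alpha^2\delta^i{}_j-y^iy_j)$ and $b_{i|j}=c(x)a_{ij}$ with $c^2=\kappa-\mu b^2$, where $\mu<0$ and $\kappa=0$. Define $\bar\alpha:=\alpha/b$ and $\bar\beta:=\beta/b^2$. Then ${}^{\bar\alpha}R^i{}_j=0$ and $\bar b_{i|j}=0$. In this case $\bar b=1$.
   Context: ${}^\alpha R^i{}_j$ denotes the Riemann curvature tensor of $\alpha$, $y_j=a_{jk}y^k$, $b_{i|j}$ the covariant derivative of $\beta$ with respect to $\alpha$; ${}^{\bar\alpha}R^i{}_j$ is the Riemann curvature tensor of $\bar\alpha$, $\bar b_{i|j}$ the covariant derivative of $\bar\beta=\bar b_iy^i$ with respect to $\bar\alpha$, and $\bar b=\|\bar\beta\|_{\bar\alpha}$. *)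

(* Defs.v *)
(* Local-coordinate (chart) formalization of
   Riemannian geometry on an open set U of R^n (points are 'rV[R]_n). *)
From HB Require Import structures.
From mathcomp Require Import all_boot all_order all_algebra.
From mathcomp Require Import all_classical all_reals all_analysis.
Set Implicit Arguments. Unset Strict Implicit. Unset Printing Implicit Defensive.
Import Order.TTheory GRing.Theory Num.Theory.
Import numFieldNormedType.Exports.
Local Open Scope classical_set_scope.
Local Open Scope ring_scope.

Section Defs.
Variables (R : realType) (n : nat).
Notation pt := 'rV[R]_n.

Definition ecoord (k : 'I_n) : pt := delta_mx 0 k.

Definition pd (k : 'I_n) (f : pt -> R) : pt -> R :=
  fun x => derive f x (ecoord k).

Fixpoint iterpd (ks : seq 'I_n) (f : pt -> R) : pt -> R :=
  match ks with
  | [::] => f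
  | k :: ks' => pd k (iterpd ks' f)
  end.

Definition smooth_on (U : set pt) (f : pt -> R) : Prop :=
  forall (ks : seq 'I_n) (x : pt), U x ->
    {for x, continuous (iterpd ks f)} /\
    forall k : 'I_n, derivable (iterpd ks f) x (ecoord k).

Definition riemannian_on (U : set pt) (a : pt -> 'M[R]_n) : Prop :=
  (forall i j : 'I_n, smooth_on U (fun z => a z i j)) /\
  (forall x, U x -> (a x)^T = a x) /\
  (forall x, U x -> forall y : pt, y != 0 -> 0 < (y *m a x *m y^T) 0 0).

Definition oneform_on (U : set pt) (b : pt -> pt) : Prop :=
  forall i : 'I_n, smooth_on U (fun z => b z 0 i).

Definition alpha2 (a : pt -> 'M[R]_n) (x y : pt) : R :=
  \sum_i \sum_j a x i j * y 0 i * y 0 j.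

Definition ylow (a : pt -> 'M[R]_n) (x y : pt) (j : 'I_n) : R :=
  \sum_k a x j k * y 0 k.

Definition formnorm (a : pt -> 'M[R]_n) (b : pt -> pt) (x : pt) : R :=
  Num.sqrt ((b x *m invmx (a x) *m (b x)^T) 0 0).

Definition christoffel (a : pt -> 'M[R]_n) (i j k : 'I_n) (x : pt) : R :=
  2^-1 * \sum_l invmx (a x) i l *
    (pd j (fun z => a z l k) x + pd k (fun z => a z l j) x
     - pd l (fun z => a z j k) x).

(* Riemann curvature R^i_k(x,y) of the spray G^i = 1/2 Gamma^i_{jl} y^j y^l:
   R^i_k = 2 d_{x^k} G^i - y^j d_{x^j} d_{y^k} G^i
           + 2 G^j d_{y^j} d_{y^k} G^i - d_{y^j} G^i d_{y^k} G^j *)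
Definition riemann (a : pt -> 'M[R]_n) (x y : pt) (i k : 'I_n) : R :=
  \sum_j \sum_l (pd k (christoffel a i j l) x * y 0 j * y 0 l)
  - \sum_j \sum_l (pd j (christoffel a i l k) x * y 0 j * y 0 l)
  + \sum_j \sum_p \sum_q
      (christoffel a j p q x * y 0 p * y 0 q * christoffel a i j k x)
  - \sum_j \sum_p \sum_q
      (christoffel a i j p x * y 0 p * christoffel a j k q x * y 0 q).

Definition covd (a : pt -> 'M[R]_n) (b : pt -> pt) (x : pt) (i j : 'I_n) : R :=
  pd j (fun z => b z 0 i) x - \sum_k christoffel a k i j x * b x 0 k.

End Defs.

(* Main.v *)
Require Import Defs.
From HB Require Import structures.
From mathcomp Require Import all_boot all_order all_algebra.
From mathcomp Require Import all_classical all_reals all_analysis.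
From mathcomp Require Import ring.
Import Order.TTheory GRing.Theory Num.Theory.
Import numFieldNormedType.Exports.
Local Open Scope classical_set_scope.
Local Open Scope ring_scope.

Module Aux.
Set Implicit Arguments. Unset Strict Implicit. Unset Printing Implicit Defensive.

Module AlgM.
Section Alg.
Variables (R : comRingType) (n : nat).
Variables (G : 'I_n -> 'I_n -> 'I_n -> R) (dG : 'I_n -> 'I_n -> 'I_n -> 'I_n -> R)
  (a : 'I_n -> 'I_n -> R) (f g y : 'I_n -> R) (mu : R).
Hypotheses (Gs : forall i j k, G i j k = G i k j) (asy : forall j k, a j k = a k j)
  (afg : forall j, \sum_i a j i * g i = f j) (fg : \sum_i f i * g i = - mu).

Definition dl (i j : 'I_n) : R := (i == j)%:R.

Lemma sum_dl_r (F : 'I_n -> R) i : \sum_j F j * dl i j = F i.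
Proof.
rewrite (bigD1 i) //= /dl eqxx mulr1 big1 ?addr0 // => j /negbTE.
by rewrite eq_sym => ->; rewrite mulr0.
Qed.
Lemma sum_dl_l (F : 'I_n -> R) i : \sum_j F j * dl j i = F i.
Proof.
rewrite -(sum_dl_r F i); apply: eq_bigr => j _; by rewrite /dl eq_sym.
Qed.

Definition riem (G : 'I_n -> 'I_n -> 'I_n -> R) (dG : 'I_n -> 'I_n -> 'I_n -> 'I_n -> R) i k :=
  \sum_j \sum_l (dG k i j l * y j * y l)
  - \sum_j \sum_l (dG j i l k * y j * y l)
  + \sum_j \sum_p \sum_q (G j p q * y p * y q * G i j k)
  - \sum_j \sum_p \sum_q (G i j p * y p * G j k q * y q).

Definition Dd i j k := - f j * dl i k - f k * dl i j + a j k * g i.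
Definition df m j := \sum_p G p j m * f p - f j * f m - mu * a j m.
Definition dg m i := - (\sum_p G i m p * g p) - g i * f m - mu * dl i m.
Definition da m j k := \sum_p (a p k * G p j m + a j p * G p k m).
Definition dDd m i j k := - df m j * dl i k - df m k * dl i j + da m j k * g i + a j k * dg m i.

Definition p := \sum_j f j * y j.
Definition A := \sum_j \sum_l a j l * y j * y l.
Definition yl k := \sum_j a k j * y j.
Definition Gc i := \sum_p \sum_q G i p q * y p * y q.
Definition N i k := \sum_q G i k q * y q.
Definition SNf k := \sum_p N p k * f p.
Definition YN k := \sum_p yl p * N p k.
Definition SGg i k := \sum_p G i k p * g p.
Definition SGf := \sum_p Gc p * f p.
Definition aG k := \sum_p a p k * Gc p.
Definition SNg i := \sum_p N i p * g p.

Lemma B1 k : \sum_j a j k * y j = yl k.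
Proof. by apply: eq_bigr => j _; rewrite asy. Qed.
Lemma B2 k : \sum_j a j k * g j = f k.
Proof. by rewrite -afg; apply: eq_bigr => j _; rewrite asy. Qed.
Lemma B3 : \sum_j yl j * g j = p.
Proof.
rewrite /yl /p. under eq_bigr do rewrite mulr_suml.
rewrite exchange_big /=; apply: eq_bigr => m _.
rewrite -B2 mulr_suml; apply: eq_bigr => j _; ring.
Qed.
Lemma B4 : \sum_j yl j * y j = A.
Proof.
rewrite /A; apply: eq_bigr => j _; rewrite /yl mulr_suml; apply: eq_bigr => l _; ring.
Qed.
Lemma B5 q k : \sum_j G q j k * y j = N q k.
Proof. by apply: eq_bigr => j _; rewrite Gs. Qed.
Lemma B6 i : \sum_j N i j * y j = Gc i.
Proof. apply: eq_bigr => j _; rewrite /N mulr_suml; apply: eq_bigr => q _; ring. Qed.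


Lemma S2 (u v : 'I_n -> R) : \sum_j \sum_l u j * v l = (\sum_j u j) * (\sum_l v l).
Proof. rewrite mulr_suml; apply: eq_bigr => j _; by rewrite mulr_sumr. Qed.
Lemma S2c (u v : 'I_n -> R) : \sum_j \sum_l u l * v j = (\sum_l u l) * (\sum_j v j).
Proof. rewrite mulr_suml exchange_big /=; apply: eq_bigr => l _; by rewrite mulr_sumr. Qed.
Lemma SY i : \sum_j dl i j * y j = y i.
Proof. rewrite -(sum_dl_r y i); apply: eq_bigr => j _; ring. Qed.

Lemma S3swap (F : 'I_n -> 'I_n -> 'I_n -> R) :
  \sum_j \sum_l \sum_q F j l q = \sum_q \sum_j \sum_l F j l q.
Proof. under eq_bigr do rewrite exchange_big /=. by rewrite exchange_big. Qed.

Lemma DF1 k : \sum_j df k j * y j = SNf k - p * f k - mu * yl k.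
Proof.
rewrite /df (eq_bigr (fun j => (\sum_q G q j k * f q) * y j - (f j * y j) * f k - mu * (a j k * y j))); last by move=> j _; ring.
rewrite !big_split /= !sumrN -!mulr_suml -!mulr_sumr B1 -/p.
congr (_ - _ - _); rewrite /SNf.
under eq_bigr do rewrite mulr_suml.
rewrite exchange_big /=; apply: eq_bigr => q _.
rewrite -B5 mulr_suml; apply: eq_bigr => j _; ring.
Qed.

Lemma DF3 k : \sum_j df j k * y j = SNf k - f k * p - mu * yl k.
Proof.
rewrite /df (eq_bigr (fun j => (\sum_q G q k j * f q) * y j - f k * (f j * y j) - mu * (a k j * y j))); last by move=> j _; ring.
rewrite !big_split /= !sumrN -!mulr_sumr -/p -/(yl k).
congr (_ - _ - _); rewrite /SNf.
under eq_bigr do rewrite mulr_suml.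
rewrite exchange_big /=; apply: eq_bigr => q _.
rewrite /N mulr_suml; apply: eq_bigr => j _; ring.
Qed.

Lemma DF2 : \sum_j \sum_l df j l * y j * y l = SGf - p ^+ 2 - mu * A.
Proof.
transitivity (\sum_j \sum_l ((\sum_q f q * (G q l j * y l * y j)) - (f l * y l) * (f j * y j) - mu * (a j l * y j * y l))).
  apply: eq_bigr => j _; apply: eq_bigr => l _.
  have -> : \sum_q f q * (G q l j * y l * y j) = (\sum_q G q l j * f q) * y j * y l.
    by rewrite !mulr_suml; apply: eq_bigr => q _; ring.
  rewrite /df (asy j l); ring.
under eq_bigr do rewrite !big_split /= !sumrN.
rewrite !big_split /= !sumrN.
have -> : \sum_j \sum_l f l * y l * (f j * y j) = p ^+ 2.
  rewrite expr2 /p mulr_suml; apply: eq_bigr => j _; rewrite mulr_sumr; apply: eq_bigr => l _; ring.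
have -> : \sum_j \sum_l mu * (a j l * y j * y l) = mu * A.
  rewrite /A mulr_sumr; apply: eq_bigr => j _; by rewrite mulr_sumr.
congr (_ - _ - _).
rewrite /SGf /Gc exchange_big /=.
under eq_bigr do rewrite exchange_big /=.
rewrite exchange_big /=.
apply: eq_bigr => q _. rewrite mulr_suml. apply: eq_bigr => l _.
rewrite mulr_suml. apply: eq_bigr => j _. ring.
Qed.

Lemma DG1 i : \sum_j dg j i * y j = - SNg i - g i * p - mu * y i.
Proof.
rewrite /dg (eq_bigr (fun j => - ((\sum_q G i j q * g q) * y j) - g i * (f j * y j) - mu * (dl i j * y j))); last by move=> j _; ring.
rewrite !big_split /= !sumrN -!mulr_sumr -/p SY.
congr (- _ - _ - _); rewrite /SNg.
under eq_bigr do rewrite mulr_suml.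
rewrite exchange_big /=; apply: eq_bigr => q _.
rewrite /N mulr_suml; apply: eq_bigr => j _; rewrite Gs; ring.
Qed.

Lemma DA1 k : \sum_j \sum_l da k j l * y j * y l = 2%:R * YN k.
Proof.
transitivity (\sum_q \sum_j \sum_l ((a q l * y l) * (G q j k * y j) + (a j q * y j) * (G q l k * y l))).
  rewrite -(S3swap (fun j l q => (a q l * y l) * (G q j k * y j) + (a j q * y j) * (G q l k * y l))).
  apply: eq_bigr => j _; apply: eq_bigr => l _.
  rewrite /da !mulr_suml; apply: eq_bigr => q _; ring.
rewrite /YN mulr_sumr; apply: eq_bigr => q _.
under eq_bigr do rewrite big_split /=.
rewrite big_split /= (S2c (fun l => a q l * y l) (fun j => G q j k * y j)).
rewrite (S2 (fun j => a j q * y j) (fun l => G q l k * y l)).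
rewrite B5 B1. rewrite -/(yl q). ring.
Qed.

Lemma DA2 k : \sum_j \sum_l da j l k * y j * y l = aG k + YN k.
Proof.
transitivity (\sum_q \sum_j \sum_l (a q k * (G q l j * y l * y j) + (a l q * y l) * (G q k j * y j))).
  rewrite -(S3swap (fun j l q => a q k * (G q l j * y l * y j) + (a l q * y l) * (G q k j * y j))).
  apply: eq_bigr => j _; apply: eq_bigr => l _.
  rewrite /da !mulr_suml; apply: eq_bigr => q _; ring.
rewrite /aG /YN -big_split /=; apply: eq_bigr => q _.
under eq_bigr do rewrite big_split /=.
rewrite big_split /= (S2c (fun l => a l q * y l) (fun j => G q k j * y j)).
rewrite B1 -/(N q k).
congr (_ + _).
rewrite mulr_sumr exchange_big /=; apply: eq_bigr => l _; rewrite mulr_sumr; apply: eq_bigr => j _; ring.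
Qed.


Lemma SD (F : 'I_n -> R) i : \sum_j dl i j * F j = F i.
Proof. rewrite -(sum_dl_r F i); apply: eq_bigr => j _; ring. Qed.

Lemma DT1 i k : \sum_j \sum_l dDd k i j l * y j * y l =
  - 2%:R * (SNf k - p * f k - mu * yl k) * y i + 2%:R * YN k * g i + A * dg k i.
Proof.
transitivity (\sum_j \sum_l ((-1) * ((df k j * y j) * (dl i l * y l)) + (-1) * ((df k l * y l) * (dl i j * y j))
   + g i * (da k j l * y j * y l) + dg k i * (a j l * y j * y l))).
  apply: eq_bigr => j _; apply: eq_bigr => l _; rewrite /dDd; ring.
under eq_bigr do rewrite !big_split /= -!mulr_sumr.
rewrite !big_split /= -!mulr_sumr.
rewrite (S2c (fun l => df k l * y l) (fun j => dl i j * y j)).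
rewrite !SY -?mulr_suml !DF1 DA1 -/A. ring.
Qed.

Lemma DT2 i k : \sum_j \sum_l dDd j i l k * y j * y l =
  - dl i k * (SGf - p ^+ 2 - mu * A) - (SNf k - f k * p - mu * yl k) * y i
  + g i * (aG k + YN k) + yl k * (- SNg i - g i * p - mu * y i).
Proof.
transitivity (\sum_j \sum_l ((- dl i k) * (df j l * y j * y l) + (-1) * ((df j k * y j) * (dl i l * y l))
   + g i * (da j l k * y j * y l) + 1 * ((a l k * y l) * (dg j i * y j)))).
  apply: eq_bigr => j _; apply: eq_bigr => l _; rewrite /dDd; ring.
under eq_bigr do rewrite !big_split /= -!mulr_sumr.
rewrite !big_split /= -!mulr_sumr.
rewrite (S2c (fun l => a l k * y l) (fun j => dg j i * y j)).
rewrite !SY -?mulr_suml DF2 !DF3 DA2 DG1 B1. ring.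
Qed.

Definition Gt i j k := G i j k + Dd i j k.
Definition dGt m i j k := dG m i j k + dDd m i j k.

Lemma EGt j : \sum_p \sum_q Gt j p q * y p * y q = Gc j + (- 2%:R * p * y j + A * g j).
Proof.
transitivity (\sum_p \sum_q (G j p q * y p * y q + (-1) * ((f p * y p) * (dl j q * y q))
  + (-1) * ((f q * y q) * (dl j p * y p)) + g j * (a p q * y p * y q))).
  apply: eq_bigr => p0 _; apply: eq_bigr => q _; rewrite /Gt /Dd; ring.
under eq_bigr do rewrite !big_split /= -!mulr_sumr.
rewrite !big_split /= -!mulr_sumr.
rewrite (S2c (fun q => f q * y q) (fun p => dl j p * y p)).
rewrite !SY -?mulr_suml -/p -/A -/(Gc j). ring.
Qed.

Lemma DT3 i k : \sum_j \sum_p \sum_q (Gt j p q * y p * y q * Gt i j k) =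
  \sum_j \sum_p \sum_q (G j p q * y p * y q * G i j k) +
  (- SGf * dl i k - Gc i * f k + aG k * g i - 2%:R * p * N i k + A * SGg i k
   + 2%:R * p ^+ 2 * dl i k + 2%:R * p * f k * y i - 2%:R * p * yl k * g i + A * mu * dl i k).
Proof.
have T30 : \sum_j \sum_p \sum_q (G j p q * y p * y q * G i j k) = \sum_j Gc j * G i j k.
  apply: eq_bigr => j _; rewrite /Gc mulr_suml; apply: eq_bigr => p0 _; by rewrite mulr_suml.
have -> : \sum_j \sum_p \sum_q (Gt j p q * y p * y q * Gt i j k) =
   \sum_j (Gc j + (- 2%:R * p * y j + A * g j)) * (G i j k + Dd i j k).
  apply: eq_bigr => j _; rewrite -EGt mulr_suml; apply: eq_bigr => p0 _; by rewrite mulr_suml.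
rewrite T30.
transitivity (\sum_j (Gc j * G i j k + (- dl i k) * (Gc j * f j) + (- f k) * (dl i j * Gc j)
  + g i * (a j k * Gc j) + (- 2%:R * p) * (G i k j * y j) + A * (G i k j * g j)
  + (2%:R * p * dl i k) * (f j * y j) + (2%:R * p * f k) * (dl i j * y j) + (- 2%:R * p * g i) * (a j k * y j)
  + (- A * dl i k) * (f j * g j) + (- A * f k) * (dl i j * g j) + (A * g i) * (a j k * g j))).
  apply: eq_bigr => j _; rewrite /Dd -(Gs i j k); ring.
rewrite !big_split /= -!mulr_sumr.
rewrite SD SD SD B1 B2 -/(N i k) -/(SGg i k) -/p fg.
rewrite (_ : \sum_j Gc j * f j = SGf) // (_ : \sum_j a j k * Gc j = aG k) //.
ring.
Qed.

Definition M i j := - f j * y i - p * dl i j + yl j * g i.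

Lemma NM i j : \sum_p0 Gt i j p0 * y p0 = N i j + M i j.
Proof.
transitivity (\sum_q (G i j q * y q + (- f j) * (dl i q * y q) + (- dl i j) * (f q * y q) + g i * (a j q * y q))).
  apply: eq_bigr => q _; rewrite /Gt /Dd; ring.
rewrite !big_split /= -!mulr_sumr SY -/p -/(yl j) -/(N i j) /M. ring.
Qed.

Lemma DT4 i k : \sum_j \sum_p \sum_q (Gt i j p * y p * Gt j k q * y q) =
  \sum_j \sum_p \sum_q (G i j p * y p * G j k q * y q) +
  (- f k * Gc i - p * N i k + yl k * SNg i - y i * SNf k - p * N i k + g i * YN k
   + 3%:R * p * f k * y i + mu * y i * yl k + p ^+ 2 * dl i k - p * yl k * g i - A * g i * f k).
Proof.
have E : forall (H : 'I_n -> 'I_n -> 'I_n -> R) j, \sum_p \sum_q (H i j p * y p * H j k q * y q) =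
   (\sum_p H i j p * y p) * (\sum_q H j k q * y q).
  move=> H j; rewrite mulr_suml; apply: eq_bigr => p0 _; rewrite mulr_sumr; apply: eq_bigr => q _; ring.
under eq_bigr do rewrite E NM NM.
under [X in _ = X + _]eq_bigr do rewrite E -/(N i _) -/(N _ k).
rewrite /M.
transitivity (\sum_j (N i j * N j k + (- f k) * (N i j * y j) + (- p) * (N i j * dl j k) + yl k * (N i j * g j)
  + (- y i) * (N j k * f j) + (- p) * (dl i j * N j k) + g i * (yl j * N j k)
  + (y i * f k) * (f j * y j) + (p * y i) * (f j * dl j k) + (- (y i * yl k)) * (f j * g j)
  + (p * f k) * (dl i j * y j) + (p ^+ 2) * (dl i j * dl j k) + (- (p * yl k)) * (dl i j * g j)
  + (- (g i * f k)) * (yl j * y j) + (- (g i * p)) * (yl j * dl j k) + (g i * yl k) * (yl j * g j))).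
  apply: eq_bigr => j _; ring.
rewrite !big_split /= -!mulr_sumr.
rewrite !sum_dl_l !SD B6 B3 B4 -/p fg -/(SNg i) -/(SNf k) -/(YN k).
ring.
Qed.

Theorem alg_main i k : riem Gt dGt i k = riem G dG i k - mu * (A * dl i k - y i * yl k).
Proof.
rewrite /riem DT3 DT4.
have -> : \sum_j \sum_l dGt k i j l * y j * y l = \sum_j \sum_l dG k i j l * y j * y l + \sum_j \sum_l dDd k i j l * y j * y l.
  rewrite -big_split /=; apply: eq_bigr => j _; rewrite -big_split /=; apply: eq_bigr => l _; rewrite /dGt; ring.
have -> : \sum_j \sum_l dGt j i l k * y j * y l = \sum_j \sum_l dG j i l k * y j * y l + \sum_j \sum_l dDd j i l k * y j * y l.
  rewrite -big_split /=; apply: eq_bigr => j _; rewrite -big_split /=; apply: eq_bigr => l _; rewrite /dGt; ring.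
rewrite DT1 DT2 /dg -/(SGg i k).
ring.
Qed.

End Alg.
End AlgM.
Section Deriv.
Variables (R : realType) (n : nat).
Notation pt := 'rV[R]_n.
Implicit Types (f g : pt -> R) (z v : pt).

Lemma dvD f g z v : derivable f z v -> derivable g z v -> derivable (fun w => f w + g w) z v.
Proof. move=> df dg; exact: derivableD. Qed.
Lemma drD f g z v : derivable f z v -> derivable g z v ->
  derive (fun w => f w + g w) z v = derive f z v + derive g z v.
Proof. move=> df dg; exact: deriveD. Qed.
Lemma dvB f g z v : derivable f z v -> derivable g z v -> derivable (fun w => f w - g w) z v.
Proof. move=> df dg; exact: derivableB. Qed.
Lemma drB f g z v : derivable f z v -> derivable g z v ->
  derive (fun w => f w - g w) z v = derive f z v - derive g z v.
Proof. move=> df dg; exact: deriveB. Qed.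
Lemma dvN f z v : derivable f z v -> derivable (fun w => - f w) z v.
Proof. move=> df; exact: derivableN. Qed.
Lemma drN f z v : derivable f z v -> derive (fun w => - f w) z v = - derive f z v.
Proof. move=> df; exact: deriveN. Qed.
Lemma dvM f g z v : derivable f z v -> derivable g z v -> derivable (fun w => f w * g w) z v.
Proof. move=> df dg; exact: derivableM. Qed.
Lemma drM f g z v : derivable f z v -> derivable g z v ->
  derive (fun w => f w * g w) z v = f z * derive g z v + g z * derive f z v.
Proof. move=> df dg; exact: deriveM. Qed.
Lemma dvC (k : R) z v : derivable (fun _ : pt => k) z v.
Proof. exact: derivable_cst. Qed.
Lemma drC (k : R) z v : derive (fun _ : pt => k) z v = 0.
Proof. exact: derive_cst. Qed.
Lemma dvV f z v : f z != 0 -> derivable f z v -> derivable (fun w => (f w)^-1) z v.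
Proof. move=> h df; exact: derivableV. Qed.
Lemma drV f z v : f z != 0 -> derivable f z v ->
  derive (fun w => (f w)^-1) z v = - (f z)^-1 ^+ 2 * derive f z v.
Proof. move=> h df; rewrite deriveV // exprVn; by []. Qed.

Lemma dvsum (I : Type) (r : seq I) (P : pred I) (F : I -> pt -> R) z v :
  (forall i, P i -> derivable (F i) z v) ->
  derivable (fun w => \sum_(i <- r | P i) F i w) z v /\
  derive (fun w => \sum_(i <- r | P i) F i w) z v = \sum_(i <- r | P i) derive (F i) z v.
Proof.
move=> hF; elim: r => [|i r [IH1 IH2]].
  rewrite (_ : (fun w => \sum_(i <- [::] | P i) F i w) = fun _ => 0); last by apply/funext => w; rewrite big_nil.
  by rewrite big_nil; split; [exact: dvC | exact: drC].
rewrite (_ : (fun w => \sum_(j <- i :: r | P j) F j w) = fun w => (if P i then F i w else 0) + \sum_(j <- r | P j) F j w); last first.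
  by apply/funext => w; rewrite big_cons; case: (P i); rewrite ?add0r.
have hi : derivable (fun w => if P i then F i w else 0) z v.
  by case E: (P i); [exact: hF | exact: dvC].
split; first exact: dvD.
rewrite drD // IH2 big_cons; case E: (P i) => //.
by rewrite drC add0r.
Qed.

Lemma dvprod (I : Type) (r : seq I) (P : pred I) (F : I -> pt -> R) z v :
  (forall i, P i -> derivable (F i) z v) ->
  derivable (fun w => \prod_(i <- r | P i) F i w) z v.
Proof.
move=> hF; elim: r => [|i r IH].
  rewrite (_ : (fun w => \prod_(i <- [::] | P i) F i w) = fun _ => 1); last by apply/funext => w; rewrite big_nil.
  exact: dvC.
rewrite (_ : (fun w => \prod_(j <- i :: r | P j) F j w) = fun w => (if P i then F i w else 1) * \prod_(j <- r | P j) F j w); last first.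
  by apply/funext => w; rewrite big_cons; case: (P i); rewrite ?mul1r.
apply: dvM => //; by case E: (P i); [exact: hF | exact: dvC].
Qed.

Lemma dv_det m (M : pt -> 'M[R]_m) z v : (forall i j, derivable (fun w => M w i j) z v) ->
  derivable (fun w => \det (M w)) z v.
Proof.
move=> hM; rewrite /determinant.
eapply proj1; apply: dvsum => s _.
apply: dvM; first exact: dvC.
by apply: dvprod => i _; exact: hM.
Qed.

End Deriv.

Section Geo.
Variables (R : realType) (n : nat) (U : set 'rV[R]_n) (a : 'rV[R]_n -> 'M[R]_n)
  (b : 'rV[R]_n -> 'rV[R]_n) (c : 'rV[R]_n -> R) (mu : R).
Hypotheses (oU : open U) (ra : riemannian_on U a) (ob : oneform_on U b)
  (bpos : forall x, U x -> 0 < formnorm a b x)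
  (Ch : forall x, U x -> forall i j : 'I_n, covd a b x i j = c x * a x i j)
  (cq : forall x, U x -> c x ^+ 2 = 0 - mu * formnorm a b x ^+ 2) (mun : mu < 0).
Notation pt := 'rV[R]_n.

Definition Ai z := invmx (a z).
Definition bs z := b z *m Ai z.
Definition q z := (b z *m invmx (a z) *m (b z)^T) 0 0.
Definition s z := (q z)^-1.
Definition Gm i j k z := christoffel a i j k z.
Definition phi z j := c z * s z * b z 0 j.
Definition phu z i := c z * s z * bs z 0 i.
Definition dl (i j : 'I_n) : R := (i == j)%:R.

Lemma nbU z : U z -> \forall w \near z, U w.
Proof. move=> Uz; exact: open_nbhs_nbhs. Qed.

Lemma asym z : U z -> forall j k, a z j k = a z k j.
Proof.
move=> Uz j k; have h := ra.2.1 z Uz.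
have := congr1 (fun M : 'M[R]_n => M k j) h; rewrite /= mxE => ->; by [].
Qed.

Lemma unit z : U z -> a z \in unitmx.
Proof.
move=> Uz; rewrite -row_free_unit; apply: inj_row_free => v hv; apply/eqP; apply: contraT => vn0.
have := ra.2.2 z Uz v vn0; by rewrite hv mul0mx mxE ltxx.
Qed.

Lemma aAi z : U z -> a z *m Ai z = 1%:M.
Proof. move=> Uz; rewrite /Ai mulmxV //; exact: unit. Qed.
Lemma Aia z : U z -> Ai z *m a z = 1%:M.
Proof. move=> Uz; rewrite /Ai mulVmx //; exact: unit. Qed.
Lemma Aisym z : U z -> forall j k, Ai z j k = Ai z k j.
Proof.
move=> Uz j k; have := congr1 (fun M : 'M[R]_n => M k j) (trmx_inv (a z)).
by rewrite /= mxE ra.2.1.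
Qed.

Lemma qpos z : U z -> 0 < q z.
Proof.
move=> Uz; have := bpos Uz; rewrite /formnorm -/(q z).
by case: (lerP (q z) 0) => // h; rewrite ler0_sqrtr // ltxx.
Qed.
Lemma fn2 z : U z -> formnorm a b z ^+ 2 = q z.
Proof. move=> Uz; rewrite /formnorm sqr_sqrtr //; exact/ltW/qpos. Qed.
Lemma qne0 z : U z -> q z != 0.
Proof. move=> Uz; have := qpos Uz; by rewrite lt0r => /andP[]. Qed.
Lemma sq1 z : U z -> s z * q z = 1.
Proof. move=> Uz; rewrite /s mulVf //; exact: qne0. Qed.
Lemma qE z : q z = \sum_k bs z 0 k * b z 0 k.
Proof. rewrite /q mxE; apply: eq_bigr => k _; by rewrite [(b z)^T _ _]mxE. Qed.
Lemma bsE z l : bs z 0 l = \sum_k b z 0 k * Ai z k l.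
Proof. by rewrite /bs mxE. Qed.
Lemma bsa z : U z -> forall j, \sum_k bs z 0 k * a z k j = b z 0 j.
Proof.
move=> Uz j; have := congr1 (fun M : 'M[R]_n => (b z *m M) 0 j) (Aia Uz).
rewrite /= mulmx1 mulmxA => <-; rewrite [in RHS]mxE; by [].
Qed.
Lemma hmu z : U z -> mu = - c z ^+ 2 * s z.
Proof.
move=> Uz; rewrite cq // fn2 // sub0r opprK -mulrA (mulrC (q z)) sq1 //; ring.
Qed.
Lemma cne0 z : U z -> c z != 0.
Proof.
move=> Uz; apply: contraTneq (qpos Uz) => c0.
have := cq Uz; rewrite c0 fn2 // expr0n /= sub0r => /eqP; rewrite eq_sym oppr_eq0 mulf_eq0.
rewrite (lt_eqF mun) /= => /eqP ->; by rewrite ltxx.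
Qed.

Lemma aAi_e z k l : U z -> \sum_p a z k p * Ai z p l = dl k l.
Proof. move=> Uz; have := congr1 (fun M : 'M[R]_n => M k l) (aAi Uz); by rewrite /= !mxE. Qed.
Lemma Aia_e z k l : U z -> \sum_p Ai z k p * a z p l = dl k l.
Proof. move=> Uz; have := congr1 (fun M : 'M[R]_n => M k l) (Aia Uz); by rewrite /= !mxE. Qed.
Lemma sum_dl (F : 'I_n -> R) k : \sum_l dl k l * F l = F k.
Proof.
rewrite (bigD1 k) //= /dl eqxx mul1r big1 ?addr0 // => l /negbTE; by rewrite eq_sym => ->; rewrite mul0r.
Qed.

Lemma contr_aAi z (F : 'I_n -> R) k : U z -> \sum_p a z k p * \sum_l Ai z p l * F l = F k.
Proof.
move=> Uz; transitivity (\sum_l (\sum_p a z k p * Ai z p l) * F l).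
  under eq_bigr do rewrite mulr_sumr.
  rewrite exchange_big /=; apply: eq_bigr => l _; rewrite mulr_suml; apply: eq_bigr => p _; ring.
under eq_bigr => l _ do rewrite aAi_e //.
exact: sum_dl.
Qed.
Lemma contr_Aia z (F : 'I_n -> R) k : U z -> \sum_p Ai z k p * \sum_l a z p l * F l = F k.
Proof.
move=> Uz; transitivity (\sum_l (\sum_p Ai z k p * a z p l) * F l).
  under eq_bigr do rewrite mulr_sumr.
  rewrite exchange_big /=; apply: eq_bigr => l _; rewrite mulr_suml; apply: eq_bigr => p _; ring.
under eq_bigr => l _ do rewrite Aia_e //.
exact: sum_dl.
Qed.


Lemma dv_a z m i j : U z -> derivable (fun w => a w i j) z (ecoord R m).
Proof. move=> Uz; exact: ((ra.1 i j [::] z Uz).2 m). Qed.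
Lemma dv_pa z m m' i j : U z -> derivable (pd m' (fun w => a w i j)) z (ecoord R m).
Proof. move=> Uz; exact: ((ra.1 i j [:: m'] z Uz).2 m). Qed.
Lemma dv_b z m j : U z -> derivable (fun w => b w 0 j) z (ecoord R m).
Proof. move=> Uz; have [_ h] := ob j [::] Uz; exact: h m. Qed.
Lemma dv_pb z m m' j : U z -> derivable (pd m' (fun w => b w 0 j)) z (ecoord R m).
Proof. move=> Uz; have [_ h] := ob j [:: m'] Uz; exact: h m. Qed.

Lemma AiE w i j : U w -> Ai w i j = (\det (a w))^-1 * ((-1) ^+ (j + i) * \det (row' j (col' i (a w)))).
Proof. move=> Uw; rewrite /Ai /invmx unit // !mxE; by []. Qed.

Lemma dv_Ai z m i j : U z -> derivable (fun w => Ai w i j) z (ecoord R m).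
Proof.
move=> Uz.
apply: (@near_eq_derivable _ _ _ (fun w => (\det (a w))^-1 * ((-1) ^+ (j + i) * \det (row' j (col' i (a w)))))).
  apply: filterS (nbU Uz) => w Uw; by rewrite AiE.
apply: dvM.
  apply: dvV; first by have := unit Uz; rewrite unitmxE unitfE.
  by apply: dv_det => r c0; exact: dv_a.
apply: dvM; first exact: dvC.
apply: dv_det => r c0.
rewrite (_ : (fun w => row' j (col' i (a w)) r c0) = fun w => a w (lift j r) (lift i c0)); last by apply/funext => w; rewrite !mxE.
exact: dv_a.
Qed.

Lemma dv_Gm z m i j k : U z -> derivable (Gm i j k) z (ecoord R m).
Proof.
move=> Uz; rewrite /Gm /christoffel.
apply: dvM; first exact: dvC.
eapply proj1; apply: dvsum => l _.
apply: dvM; first exact: dv_Ai.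
by apply: dvB; [apply: dvD|]; exact: dv_pa.
Qed.

Lemma dv_bs z m i : U z -> derivable (fun w => bs w 0 i) z (ecoord R m).
Proof.
move=> Uz; rewrite (_ : (fun w => bs w 0 i) = fun w => \sum_k b w 0 k * Ai w k i); last by apply/funext => w; rewrite bsE.
eapply proj1; apply: dvsum => k _; apply: dvM; [exact: dv_b | exact: dv_Ai].
Qed.

Lemma dv_q z m : U z -> derivable q z (ecoord R m).
Proof.
move=> Uz; rewrite (_ : q = fun w => \sum_k bs w 0 k * b w 0 k); last by apply/funext => w; rewrite qE.
eapply proj1; apply: dvsum => k _; apply: dvM; [exact: dv_bs | exact: dv_b].
Qed.

Lemma dv_s z m : U z -> derivable s z (ecoord R m).
Proof. move=> Uz; apply: dvV; [exact: qne0 | exact: dv_q]. Qed.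

Lemma app z m : U z -> 0 < a z m m.
Proof.
move=> Uz; have en0 : 'e_m != 0 :> 'rV[R]_n.
  apply/eqP => /matrixP /(_ 0 m); rewrite !mxE !eqxx /= => /eqP; by rewrite oner_eq0.
have := ra.2.2 z Uz _ en0; by rewrite -rowE trmx_delta -colE !mxE.
Qed.

Lemma dv_covd z m i j : U z -> derivable (fun w => covd a b w i j) z (ecoord R m).
Proof.
move=> Uz; rewrite /covd; apply: dvB; first exact: dv_pb.
eapply proj1; apply: dvsum => k _; apply: dvM; [exact: dv_Gm | exact: dv_b].
Qed.

Lemma dv_c z m : U z -> derivable c z (ecoord R m).
Proof.
move=> Uz.
apply: (@near_eq_derivable _ _ _ (fun w => covd a b w m m * (a w m m)^-1)).
  apply: filterS (nbU Uz) => w Uw; rewrite Ch // mulfK //; have := app m Uw; by rewrite lt0r => /andP[].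
apply: dvM; first exact: dv_covd.
apply: dvV; last exact: dv_a.
have := app m Uz; by rewrite lt0r => /andP[].
Qed.

Lemma dv_phi z m j : U z -> derivable (fun w => phi w j) z (ecoord R m).
Proof. move=> Uz; rewrite /phi; apply: dvM; [apply: dvM; [exact: dv_c | exact: dv_s] | exact: dv_b]. Qed.
Lemma dv_phu z m i : U z -> derivable (fun w => phu w i) z (ecoord R m).
Proof. move=> Uz; rewrite /phu; apply: dvM; [apply: dvM; [exact: dv_c | exact: dv_s] | exact: dv_bs]. Qed.

Lemma V_asym z m j k : U z -> pd m (fun w => a w j k) z = pd m (fun w => a w k j) z.
Proof. move=> Uz; rewrite /pd; apply: near_eq_derive; apply: filterS (nbU Uz) => w Uw; exact: asym. Qed.

Lemma Gsym z i j k : U z -> Gm i j k z = Gm i k j z.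
Proof.
move=> Uz; rewrite /Gm /christoffel; congr (_ * _); apply: eq_bigr => l _.
rewrite (V_asym l j k Uz); congr (_ * (_ - _)); by rewrite addrC.
Qed.

Lemma contrG z k j m : U z -> \sum_p a z k p * Gm p j m z =
  2^-1 * (pd j (fun w => a w k m) z + pd m (fun w => a w k j) z - pd k (fun w => a w j m) z).
Proof.
move=> Uz; rewrite /Gm /christoffel.
under eq_bigr do rewrite mulrCA; rewrite -mulr_sumr.
by rewrite (contr_aAi (fun l => pd j (fun w => a w l m) z + pd m (fun w => a w l j) z - pd l (fun w => a w j m) z)).
Qed.

Lemma V_compat z m j k : U z -> pd m (fun w => a w j k) z =
  \sum_p (a z p k * Gm p j m z + a z j p * Gm p k m z).
Proof.
move=> Uz; rewrite big_split /=.
under eq_bigr do rewrite (asym Uz _ k).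
rewrite !contrG // (V_asym m k j Uz) (V_asym j k m Uz) (V_asym k j m Uz).
by field.
Qed.

Lemma drsum (F : 'I_n -> pt -> R) z v : (forall k, derivable (F k) z v) ->
  derive (fun w => \sum_k F k w) z v = \sum_k derive (F k) z v.
Proof. move=> h; have [_ ->] := @dvsum _ _ 'I_n (index_enum 'I_n) xpredT F z v (fun k _ => h k); by []. Qed.

Lemma V_b z m j : U z -> pd m (fun w => b w 0 j) z = c z * a z j m + \sum_p Gm p j m z * b z 0 p.
Proof. move=> Uz; have := Ch Uz j m; rewrite /covd => <-; by rewrite /Gm subrK. Qed.

Lemma contrR z (F : 'I_n -> R) l : U z -> \sum_j (\sum_k F k * a z k j) * Ai z j l = F l.
Proof.
move=> Uz; transitivity (\sum_k F k * \sum_j a z k j * Ai z j l).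
  under eq_bigr do rewrite mulr_suml.
  rewrite exchange_big /=; apply: eq_bigr => k _; rewrite mulr_sumr; apply: eq_bigr => j _; ring.
under eq_bigr do rewrite aAi_e //.
rewrite -(sum_dl F l); apply: eq_bigr => k _; rewrite /dl eq_sym; ring.
Qed.

Lemma step1 z m j : U z ->
  \sum_k (bs z 0 k * pd m (fun w => a w k j) z + a z k j * pd m (fun w => bs w 0 k) z) =
  pd m (fun w => b w 0 j) z.
Proof.
move=> Uz.
have e : pd m (fun w => \sum_k bs w 0 k * a w k j) z = pd m (fun w => b w 0 j) z.
  rewrite /pd; apply: near_eq_derive; apply: filterS (nbU Uz) => w Uw; exact: bsa.
rewrite -e /pd drsum; last by move=> k; apply: dvM; [exact: dv_bs | exact: dv_a].
apply: eq_bigr => k _; rewrite drM //; [exact: dv_bs | exact: dv_a].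
Qed.

Lemma V_bs z m l : U z -> pd m (fun w => bs w 0 l) z = c z * dl l m - \sum_k Gm l k m z * bs z 0 k.
Proof.
move=> Uz.
pose X p := \sum_k Gm p k m z * bs z 0 k.
pose H k := c z * dl m k - X k.
have key : forall j, \sum_k pd m (fun w => bs w 0 k) z * a z k j = \sum_k H k * a z k j.
  move=> j.
  have s1 := step1 m j Uz.
  have e1 : \sum_k pd m (fun w => bs w 0 k) z * a z k j =
      pd m (fun w => b w 0 j) z - \sum_k bs z 0 k * pd m (fun w => a w k j) z.
    rewrite -s1 big_split /= addrC addrK; apply: eq_bigr => k _; ring.
  rewrite e1 V_b //.
  have -> : \sum_k bs z 0 k * pd m (fun w => a w k j) z = \sum_p X p * a z p j + \sum_p Gm p j m z * b z 0 p.
    under eq_bigr do rewrite V_compat // mulr_sumr.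
    rewrite exchange_big /= -big_split; apply: eq_bigr => p _ /=.
    rewrite -(bsa Uz p) /X mulr_suml mulr_sumr -big_split /=; apply: eq_bigr => k _; ring.
  rewrite /H.
  under [RHS]eq_bigr do rewrite mulrBl.
  rewrite sumrB.
  have -> : \sum_k c z * dl m k * a z k j = c z * a z j m.
    rewrite -(asym Uz m j) -(sum_dl (fun k => a z k j) m) mulr_sumr; apply: eq_bigr => k _; ring.
  ring.
have := contrR (fun k => pd m (fun w => bs w 0 k) z) l Uz.
under eq_bigr do rewrite key.
rewrite contrR // => <-.
rewrite /H /X; congr (_ * _ - _); by rewrite /dl eq_sym.
Qed.

Lemma V_q z m : U z -> pd m q z = 2 * c z * b z 0 m.
Proof.
move=> Uz; rewrite (_ : q = fun w => \sum_k bs w 0 k * b w 0 k); last by apply/funext => w; rewrite qE.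
rewrite /pd drsum; last by move=> k; apply: dvM; [exact: dv_bs | exact: dv_b].
have -> : \sum_k derive (fun w => bs w 0 k * b w 0 k) z (ecoord R m) =
   \sum_k (bs z 0 k * (c z * a z k m) + bs z 0 k * \sum_p Gm p k m z * b z 0 p
     + (b z 0 k * (c z * dl k m) - b z 0 k * \sum_p Gm k p m z * bs z 0 p)).
  apply: eq_bigr => k _; rewrite drM; [|exact: dv_bs|exact: dv_b].
  rewrite -/(pd m (fun w => b w 0 k) z) -/(pd m (fun w => bs w 0 k) z) V_b // V_bs //; ring.
rewrite big_split big_split sumrB /=.
have -> : \sum_i bs z 0 i * (c z * a z i m) = c z * b z 0 m.
  rewrite -(bsa Uz m) mulr_sumr; apply: eq_bigr => k _; ring.
have -> : \sum_i b z 0 i * (c z * dl i m) = c z * b z 0 m.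
  rewrite -(sum_dl (fun k => b z 0 k) m) mulr_sumr; apply: eq_bigr => k _; rewrite /dl eq_sym; ring.
have -> : \sum_i b z 0 i * \sum_k Gm i k m z * bs z 0 k = \sum_i bs z 0 i * \sum_p Gm p i m z * b z 0 p.
  under eq_bigr do rewrite mulr_sumr.
  rewrite exchange_big /=; apply: eq_bigr => k _; rewrite mulr_sumr; apply: eq_bigr => i _; ring.
ring.
Qed.

Lemma V_s z m : U z -> pd m s z = - s z ^+ 2 * (2 * c z * b z 0 m).
Proof. move=> Uz; rewrite /pd /s drV; [|exact: qne0|exact: dv_q]. by rewrite -/(pd m q z) V_q. Qed.

Lemma V_c z m : U z -> pd m c z = - mu * b z 0 m.
Proof.
move=> Uz.
have e : pd m (fun w => c w * c w) z = pd m (fun w => - mu * q w) z.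
  rewrite /pd; apply: near_eq_derive; apply: filterS (nbU Uz) => w Uw.
  by rewrite -expr2 cq // fn2 // sub0r mulNr.
move: e; rewrite /pd drM; [|exact: dv_c|exact: dv_c].
rewrite drM; [|exact: dvC|exact: dv_q].
rewrite drC -/(pd m q z) -/(pd m c z) V_q // => e.
have h2 : (2 : R) * c z != 0 by rewrite mulf_neq0 ?pnatr_eq0 // cne0.
apply: (mulfI h2).
transitivity (c z * pd m c z + c z * pd m c z); first by ring.
rewrite e; ring.
Qed.

Lemma V_phi z m j : U z -> pd m (fun w => phi w j) z =
  \sum_p Gm p j m z * phi z p - phi z j * phi z m - mu * a z j m.
Proof.
move=> Uz; rewrite /pd /phi drM; [|apply: dvM; [exact: dv_c|exact: dv_s]|exact: dv_b].
rewrite drM; [|exact: dv_c|exact: dv_s].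
rewrite -/(pd m c z) -/(pd m s z) -/(pd m (fun w => b w 0 j) z) V_c // V_s // V_b //.
have -> : \sum_p Gm p j m z * (c z * s z * b z 0 p) = c z * s z * \sum_p Gm p j m z * b z 0 p.
  rewrite mulr_sumr; apply: eq_bigr => p _; ring.
rewrite (hmu Uz); ring.
Qed.

Lemma V_phu z m i : U z -> pd m (fun w => phu w i) z =
  - (\sum_p Gm i m p z * phu z p) - phu z i * phi z m - mu * dl i m.
Proof.
move=> Uz; rewrite /pd /phu drM; [|apply: dvM; [exact: dv_c|exact: dv_s]|exact: dv_bs].
rewrite drM; [|exact: dv_c|exact: dv_s].
rewrite -/(pd m c z) -/(pd m s z) -/(pd m (fun w => bs w 0 i) z) V_c // V_s // V_bs //.
have -> : \sum_p Gm i m p z * (c z * s z * bs z 0 p) = c z * s z * \sum_k Gm i k m z * bs z 0 k.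
  rewrite mulr_sumr; apply: eq_bigr => p _; rewrite (Gsym i m p Uz); ring.
rewrite /phi (hmu Uz); ring.
Qed.

Definition abar := fun x => (formnorm a b x ^+ 2)^-1 *: a x.
Definition bbar := fun x => (formnorm a b x ^+ 2)^-1 *: b x.
Definition Dfun z i j k := - phi z j * dl i k - phi z k * dl i j + a z j k * phu z i.

Lemma pd_abar z m l k : U z ->
  pd m (fun w => abar w l k) z = s z * pd m (fun w => a w l k) z + a z l k * pd m s z.
Proof.
move=> Uz.
have -> : pd m (fun w => abar w l k) z = pd m (fun w => s w * a w l k) z.
  rewrite /pd; apply: near_eq_derive; apply: filterS (nbU Uz) => w Uw.
  by rewrite /abar mxE fn2.
rewrite /pd drM //; [exact: dv_s|exact: dv_a].
Qed.

Lemma sne0 z : U z -> s z != 0.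
Proof. move=> Uz; rewrite /s invr_eq0; exact: qne0. Qed.

Lemma inv_abar z : U z -> invmx (abar z) = q z *: Ai z.
Proof.
move=> Uz; rewrite /abar fn2 // invmxZ ?invrK //.
rewrite unitmxZ ?unit // unitfE -/(s z); exact: sne0.
Qed.

Lemma Gbar z i j k : U z -> christoffel abar i j k z = Gm i j k z + Dfun z i j k.
Proof.
move=> Uz; rewrite /christoffel inv_abar //.
under eq_bigr => l _ do rewrite !pd_abar // !V_s // mxE.
pose F l := pd j (fun w => a w l k) z + pd k (fun w => a w l j) z - pd l (fun w => a w j k) z.
transitivity (2^-1 * (\sum_l ((s z * q z) * (Ai z i l * F l)) -
   \sum_l (2 * (s z * q z) * s z * c z) * (b z 0 j * (Ai z i l * a z l k) + b z 0 k * (Ai z i l * a z l j)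
        - a z j k * (Ai z i l * b z 0 l)))).
  congr (_ * _); rewrite -sumrB; apply: eq_bigr => l _; rewrite /F; ring.
rewrite sq1 // -!mulr_sumr.
rewrite sumrB big_split /= -!mulr_sumr !Aia_e //.
have -> : \sum_l Ai z i l * b z 0 l = bs z 0 i.
  rewrite bsE; apply: eq_bigr => l _; rewrite (Aisym Uz i l); ring.
rewrite /Gm /christoffel /Dfun /phi /phu.
have -> : \sum_l invmx (a z) i l * (pd j (fun w => a w l k) z + pd k (fun w => a w l j) z - pd l (fun w => a w j k) z) = \sum_l Ai z i l * F l by [].
by rewrite /dl; field.
Qed.

Lemma dv_Dfun z m i j k : U z -> derivable (fun w => Dfun w i j k) z (ecoord R m).
Proof.
move=> Uz; rewrite /Dfun.
apply: dvD; first apply: dvB.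
- apply: dvM; [apply: dvN; exact: dv_phi|exact: dvC].
- apply: dvM; [exact: dv_phi|exact: dvC].
- apply: dvM; [exact: dv_a|exact: dv_phu].
Qed.

Lemma V_Dfun z m i j k : U z -> pd m (fun w => Dfun w i j k) z =
  - pd m (fun w => phi w j) z * dl i k - pd m (fun w => phi w k) z * dl i j
  + pd m (fun w => a w j k) z * phu z i + a z j k * pd m (fun w => phu w i) z.
Proof.
move=> Uz; rewrite /pd /Dfun.
have h1 : derivable (fun w => - phi w j * dl i k) z (ecoord R m).
  apply: dvM; [apply: dvN; exact: dv_phi|exact: dvC].
have h2 : derivable (fun w => phi w k * dl i j) z (ecoord R m).
  apply: dvM; [exact: dv_phi|exact: dvC].
have h3 : derivable (fun w => a w j k * phu w i) z (ecoord R m).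
  apply: dvM; [exact: dv_a|exact: dv_phu].
rewrite (@drD _ _ (fun w => - phi w j * dl i k - phi w k * dl i j) (fun w => a w j k * phu w i)); last exact: h3; last exact: dvB.
rewrite (@drB _ _ (fun w => - phi w j * dl i k) (fun w => phi w k * dl i j)) //.
rewrite (@drM _ _ (fun w => - phi w j) (fun w => dl i k)); last exact: dvC; last (apply: dvN; exact: dv_phi).
rewrite (@drM _ _ (fun w => phi w k) (fun w => dl i j)); last exact: dvC; last exact: dv_phi.
rewrite (@drM _ _ (fun w => a w j k) (fun w => phu w i)); last exact: dv_phu; last exact: dv_a.
rewrite (@drN _ _ (fun w => phi w j)); last exact: dv_phi.
rewrite !drC; ring.
Qed.

Lemma pd_Gbar x m i j k : U x ->
  pd m (christoffel abar i j k) x = pd m (Gm i j k) x + pd m (fun w => Dfun w i j k) x.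
Proof.
move=> Ux.
have -> : pd m (christoffel abar i j k) x = pd m (fun w => Gm i j k w + Dfun w i j k) x.
  rewrite /pd; apply: near_eq_derive; apply: filterS (nbU Ux) => w Uw; exact: Gbar.
rewrite /pd drD //; [exact: dv_Gm|exact: dv_Dfun].
Qed.

Hypothesis Rh : forall x, U x -> forall (y : 'rV[R]_n) (i j : 'I_n),
      riemann a x y i j = mu * (alpha2 a x y * (i == j)%:R - y 0 i * ylow a x y j).

Lemma part1 x y i k : U x -> riemann abar x y i k = 0.
Proof.
move=> Ux.
pose G := fun i j k => Gm i j k x.
pose dG := fun m i j k => pd m (Gm i j k) x.
pose A := fun j k => a x j k.
pose f := phi x. pose g := phu x. pose Y := fun j => y 0 j.
have Gs : forall i j k, G i j k = G i k j by move=> *; exact: Gsym.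
have asy : forall j k, A j k = A k j by move=> *; exact: asym.
have afg : forall j, \sum_i A j i * g i = f j.
  move=> j; rewrite /A /g /f /phi -(bsa Ux j) mulr_sumr; apply: eq_bigr => l _; rewrite /phu (asym Ux j l); ring.
have fg : \sum_i f i * g i = - mu.
  rewrite /f /g /phi /phu (hmu Ux).
  transitivity (c x ^+ 2 * s x * s x * q x); last by rewrite -mulrA sq1 // mulr1 mulNr opprK.
  rewrite qE !mulr_sumr; apply: eq_bigr => l _; ring.
have E1 : riemann abar x y i k = AlgM.riem Y (AlgM.Gt G A f g) (@AlgM.dGt _ _ G dG A f g mu) i k.
  transitivity (AlgM.riem Y (fun i j k => christoffel abar i j k x) (fun m i j k => pd m (christoffel abar i j k) x) i k); first by [].
  congr AlgM.riem; apply/funext => i1; apply/funext => j1; apply/funext => k1.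
    by rewrite Gbar.
  apply/funext => l1.
  rewrite pd_Gbar // V_Dfun // !V_phi // !V_phu // V_compat //.
have E2 : riemann a x y i k = AlgM.riem Y G dG i k by [].
rewrite E1 (@AlgM.alg_main _ _ G dG A f g Y mu Gs asy afg fg i k) -E2 Rh //.
by rewrite subrr.
Qed.

Lemma sum_dl' (F : 'I_n -> R) k : \sum_l dl l k * F l = F k.
Proof. rewrite -(sum_dl F k); apply: eq_bigr => l _; by rewrite /dl eq_sym. Qed.

Lemma part2 x i j : U x -> covd abar bbar x i j = 0.
Proof.
move=> Ux; rewrite /covd.
have -> : pd j (fun w => bbar w 0 i) x = s x * pd j (fun w => b w 0 i) x + b x 0 i * pd j s x.
  have -> : pd j (fun w => bbar w 0 i) x = pd j (fun w => s w * b w 0 i) x.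
    rewrite /pd; apply: near_eq_derive; apply: filterS (nbU Ux) => w Uw.
    by rewrite /bbar mxE fn2.
  rewrite /pd drM //; [exact: dv_s|exact: dv_b].
have -> : \sum_k christoffel abar k i j x * bbar x 0 k = \sum_k (Gm k i j x + Dfun x k i j) * (s x * b x 0 k).
  apply: eq_bigr => k _; by rewrite Gbar // /bbar mxE fn2.
have HS : \sum_k (Gm k i j x + Dfun x k i j) * (s x * b x 0 k) = s x * \sum_k Gm k i j x * b x 0 k
    + s x * (- phi x i * b x 0 j - phi x j * b x 0 i + a x i j * (c x * s x * q x)).
  transitivity (\sum_k (s x * (Gm k i j x * b x 0 k) + (- phi x i * s x) * (dl k j * b x 0 k)
     + (- phi x j * s x) * (dl k i * b x 0 k) + (a x i j * s x * c x * s x) * (bs x 0 k * b x 0 k))).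
    apply: eq_bigr => k _; rewrite /Dfun /phu; ring.
  rewrite !big_split /= -!mulr_sumr !sum_dl' -qE; ring.
rewrite HS V_b // V_s // /phi.
transitivity (a x i j * c x * s x * (1 - s x * q x)); first by ring.
by rewrite sq1 // subrr mulr0.
Qed.

Lemma part3 x : U x -> formnorm abar bbar x = 1.
Proof.
move=> Ux; rewrite /formnorm inv_abar // /bbar fn2 // -/(s x).
have eT : (s x *: b x)^T = s x *: (b x)^T by apply/matrixP => i0 j0; rewrite !mxE.
rewrite eT -!scalemxAl -?scalemxAr -?scalemxAl -?scalemxAr -?scalemxAl -?scalemxAr.
rewrite !mxE (_ : \sum_j (b x *m Ai x) 0 j * (b x)^T j 0 = q x); last by rewrite /q mxE.
rewrite (_ : s x * (s x * (q x * q x)) = (s x * q x) * (s x * q x)); last by ring.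
by rewrite sq1 // mulr1 sqrtr1.
Qed.

End Geo.

End Aux.

Theorem lemma3p4 (R : realType) (n : nat) (U : set 'rV[R]_n)
  (a : 'rV[R]_n -> 'M[R]_n) (b : 'rV[R]_n -> 'rV[R]_n)
  (c : 'rV[R]_n -> R) (mu kappa : R) :
  open U ->
  riemannian_on U a ->
  oneform_on U b ->
  (forall x, U x -> 0 < formnorm a b x) ->
  (forall x, U x -> forall (y : 'rV[R]_n) (i j : 'I_n),
      riemann a x y i j =
      mu * (alpha2 a x y * (i == j)%:R - y 0 i * ylow a x y j)) ->
  (forall x, U x -> forall i j : 'I_n, covd a b x i j = c x * a x i j) ->
  (forall x, U x -> c x ^+ 2 = kappa - mu * formnorm a b x ^+ 2) ->
  mu < 0 -> kappa = 0 ->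
  let abar := fun x => (formnorm a b x ^+ 2)^-1 *: a x in
  let bbar := fun x => (formnorm a b x ^+ 2)^-1 *: b x in
  (forall x, U x -> forall (y : 'rV[R]_n) (i j : 'I_n),
      riemann abar x y i j = 0) /\
  (forall x, U x -> forall i j : 'I_n, covd abar bbar x i j = 0) /\
  (forall x, U x -> formnorm abar bbar x = 1).
Proof.
move=> oU ra ob bpos Rh Ch cq mun k0 abar bbar; subst kappa.
split; [|split].
- move=> x Ux y i j; exact: (Aux.part1 oU ra ob bpos Ch cq mun Rh y i j Ux).
- move=> x Ux i j; exact: (Aux.part2 oU ra ob bpos Ch i j Ux).
- move=> x Ux; exact: (Aux.part3 ra bpos Ux).
Qed.
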